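(* Let $\varrho$ be a four-qubit state on parties $A,B,C,D$ that can be prepared in the square network. Then $$\langle X_BX_D\rangle_\varrho^2+\langle Z_BX_CZ_D\rangle_\varrho^2+\langle X_AY_BY_D\rangle_\varrho^2\le 1 \quad\text{and}\quad \langle X_AX_C\rangle_\varrho^2+\langle Y_AY_BZ_CZ_D\rangle_\varrho^2\le 1.$$
   Context: $X,Y,Z$ are Pauli matrices acting on the indicated qubits (identity elsewhere), $\langle O\rangle_\varrho=\mathrm{Tr}(O\varrho)$. Square network: four bipartite sources (finite-dimensional, arbitrary dimension) shared by the pairs $AB$, $BC$, $CD$, $DA$. A state can be prepared in it if $\varrho=\sum_\lambda p_\lambda\,\mathcal E_A^{(\lambda)}\otimes\mathcal E_B^{(\lambda)}\otimes\mathcal E_C^{(\lambda)}\otimes\mathcal E_D^{(\lambda)}[\bigotimes_s\varrho_s]$, with a probability distribution $p_\lambda$, source states $\varrho_s$ and quantum channels $\mathcal E_X^{(\lambda)}$ mapping the two subsystems received by party $X$ to a qubit. *)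

(* Defs.v *)
(* Complex numbers C := R[i] over an arbitrary real closed field R
   (covers R = the real numbers).  Operators on a finite-dimensional Hilbert space
   with orthonormal basis indexed by a finite type T are represented as functions
   T -> T -> C (matrix entries); tensor products of spaces are products of index types. *)
From HB Require Import structures.
From mathcomp Require Import all_boot all_order all_algebra.
From mathcomp Require Import complex.
Set Implicit Arguments. Unset Strict Implicit. Unset Printing Implicit Defensive.
Import Order.TTheory GRing.Theory Num.Theory.
Local Open Scope ring_scope.
Local Open Scope type_scope.
Local Open Scope ring_scope.

Section QDefs.
Variable R : rcfType.
Local Notation C := (R[i]).

Definition op (T : finType) := T -> T -> C.

Definition trace (T : finType) (X : op T) : C := \sum_(x : T) X x x.

(* positive semidefinite: <v, X v> >= 0 for every vector v (this forces
   <v,Xv> to be real, hence X Hermitian) *)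
Definition psd (T : finType) (X : op T) : Prop :=
  forall v : T -> C, 0 <= \sum_(x : T) \sum_(y : T) (Num.conj (v x)) * X x y * v y.

Definition density (T : finType) (X : op T) : Prop := psd X /\ trace X = 1.

Definition eunit (T : finType) (x y : T) : op T :=
  fun a b => if (a == x) && (b == y) then 1 else 0.

Definition linear_map (T U : finType) (E : op T -> op U) : Prop :=
  forall (a : C) (X Y : op T),
    E (fun x y => a * X x y + Y x y) = (fun u v => a * E X u v + E Y u v).

(* (id_K (x) E) applied to an operator on K (x) T *)
Definition ampl (K T U : finType) (E : op T -> op U) (X : op (K * T)%type) : op (K * U)%type :=
  fun ku lv => E (fun x y => X (ku.1, x) (lv.1, y)) ku.2 lv.2.

Definition channel (T U : finType) (E : op T -> op U) : Prop :=
  [/\ linear_map E,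
      (forall X : op T, trace (E X) = trace X) &
      (forall (K : finType) (X : op (K * T)%type), psd X -> psd (ampl E X))].

(* the tensor product E1 (x) E2 (x) E3 (x) E4 of linear maps, defined through
   its (linear) action on matrix units *)
Definition tens4 (T1 T2 T3 T4 U1 U2 U3 U4 : finType)
  (E1 : op T1 -> op U1) (E2 : op T2 -> op U2)
  (E3 : op T3 -> op U3) (E4 : op T4 -> op U4)
  (X : op (T1 * T2 * T3 * T4)%type) : op (U1 * U2 * U3 * U4)%type :=
  fun u v =>
    \sum_(x : T1 * T2 * T3 * T4) \sum_(y : T1 * T2 * T3 * T4)
      X x y * (E1 (eunit x.1.1.1 y.1.1.1) u.1.1.1 v.1.1.1
             * E2 (eunit x.1.1.2 y.1.1.2) u.1.1.2 v.1.1.2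
             * E3 (eunit x.1.2 y.1.2) u.1.2 v.1.2
             * E4 (eunit x.2 y.2) u.2 v.2).

(* qubit: basis indexed by bool (false = |0>, true = |1>) *)
Definition qubit := bool.

Definition PauliX : op qubit := fun a b => if a != b then 1 else 0.
Definition PauliY : op qubit :=
  fun a b => if a == b then 0 else if b then - Complex 0 1 else Complex 0 1.
Definition PauliZ : op qubit :=
  fun a b => if a == b then (if a then -1 else 1) else 0.
Definition Id2 : op qubit := fun a b => if a == b then 1 else 0.

(* four-qubit operator P_A (x) P_B (x) P_C (x) P_D, parties ordered A,B,C,D *)
Definition pauli4 (PA PB PC PD : op qubit) : op (qubit * qubit * qubit * qubit)%type :=
  fun x y => PA x.1.1.1 y.1.1.1 * PB x.1.1.2 y.1.1.2 * PC x.1.2 y.1.2 * PD x.2 y.2.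

Definition expect (T : finType) (O rho : op T) : C :=
  \sum_(x : T) \sum_(y : T) O x y * rho y x.

(* Source AB emits systems a1 (to A) and b1 (to B),
   source BC emits b2 (to B) and c1 (to C), source CD emits c2 (to C) and d1 (to D),
   source DA emits d2 (to D) and a2 (to A).  The joint state of the four
   sources, with subsystems regrouped by receiving party
   ((a1,a2),(b1,b2),(c1,c2),(d1,d2)). *)
Definition square_sources
  (A1 A2 B1 B2 C1 C2 D1 D2 : finType)
  (rAB : op (A1 * B1)%type) (rBC : op (B2 * C1)%type) (rCD : op (C2 * D1)%type) (rDA : op (D2 * A2)%type)
  : op ((A1 * A2) * (B1 * B2) * (C1 * C2) * (D1 * D2))%type :=
  fun x y =>
    rAB (x.1.1.1.1, x.1.1.2.1) (y.1.1.1.1, y.1.1.2.1)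
  * rBC (x.1.1.2.2, x.1.2.1) (y.1.1.2.2, y.1.2.1)
  * rCD (x.1.2.2, x.2.1) (y.1.2.2, y.2.1)
  * rDA (x.2.2, x.1.1.1.2) (y.2.2, y.1.1.1.2).

Definition square_network_state (rho : op (qubit * qubit * qubit * qubit)%type) : Prop :=
  exists (A1 A2 B1 B2 C1 C2 D1 D2 : finType)
         (rAB : op (A1 * B1)%type) (rBC : op (B2 * C1)%type)
         (rCD : op (C2 * D1)%type) (rDA : op (D2 * A2)%type)
         (L : finType) (p : L -> R)
         (EA : L -> op (A1 * A2)%type -> op qubit) (EB : L -> op (B1 * B2)%type -> op qubit)
         (EC : L -> op (C1 * C2)%type -> op qubit) (ED : L -> op (D1 * D2)%type -> op qubit),
    [/\ [/\ density rAB, density rBC, density rCD & density rDA],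
        (forall l, 0 <= p l) /\ \sum_(l : L) p l = 1,
        (forall l, [/\ channel (EA l), channel (EB l), channel (EC l) & channel (ED l)]) &
        rho = (fun x y => \sum_(l : L) Complex (p l) 0 *
                 tens4 (EA l) (EB l) (EC l) (ED l)
                   (square_sources rAB rBC rCD rDA) x y)].

End QDefs.

(* Main.v *)
Require Import Defs.
From HB Require Import structures.
From mathcomp Require Import all_boot all_order all_algebra.
From mathcomp Require Import complex.
From mathcomp Require Import ring lra.
From Stdlib Require Import FunctionalExtensionality.
Set Implicit Arguments. Unset Strict Implicit. Unset Printing Implicit Defensive.
Import Order.TTheory GRing.Theory Num.Theory.
Local Open Scope ring_scope.


Section P1.
Variable R : rcfType.
Local Notation C := (R[i]).

Lemma sum_pair (T1 T2 : finType) (F : T1 * T2 -> C) :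
  \sum_(x : T1 * T2) F x = \sum_(a : T1) \sum_(b : T2) F (a, b).
Proof. by rewrite pair_big; apply: eq_bigr => -[a b]. Qed.

Lemma sumC (I J : finType) (F : I -> J -> C) :
  \sum_(i : I) \sum_(j : J) F i j = \sum_(j : J) \sum_(i : I) F i j.
Proof. exact: exchange_big. Qed.

Definition idop (T : finType) : op R T := fun x y => if x == y then 1 else 0.

Lemma sum_idr (T : finType) (F : T -> C) (x : T) :
  \sum_(y : T) F y * idop y x = F x.
Proof.
rewrite (bigD1 x) //= /idop eqxx mulr1 big1 ?addr0 // => y /negPf ->.
by rewrite mulr0.
Qed.

Lemma sum_idl (T : finType) (F : T -> C) (x : T) :
  \sum_(y : T) F y * idop x y = F x.
Proof.
rewrite -[RHS](sum_idr F x); apply: eq_bigr => y _.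
by rewrite /idop eq_sym.
Qed.

Lemma eunit_idop (T : finType) (x y a b : T) :
  eunit R x y a b = idop a x * idop b y.
Proof.
rewrite /eunit /idop; case: (a == x); case: (b == y); by rewrite ?mulr1 ?mulr0 ?mul0r.
Qed.

Lemma selfadd0 (x : C) : x = x + x -> x = 0.
Proof. by move=> h; rewrite -(subrr x) {2}h addrK. Qed.

Lemma lin0 (T U : finType) (E : op R T -> op R U) :
  linear_map E -> E (fun _ _ => 0) = (fun _ _ => 0).
Proof.
move=> hE; have h := hE 1 (fun _ _ => 0) (fun _ _ => 0).
have e : (fun x y : T => (1 : C) * 0 + 0) = (fun _ _ => 0).
  by apply: functional_extensionality => x; apply: functional_extensionality => y; rewrite mulr0 addr0.
rewrite e in h.
apply: functional_extensionality => u; apply: functional_extensionality => v.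
have := congr1 (fun f => f u v) h => /=; rewrite mul1r; exact: selfadd0.
Qed.

Lemma lin_sum (T U : finType) (E : op R T -> op R U) (I : Type) (s : seq I)
  (c : I -> C) (A : I -> op R T) :
  linear_map E ->
  E (fun x y => \sum_(i <- s) c i * A i x y) =
  (fun u v => \sum_(i <- s) c i * E (A i) u v).
Proof.
move=> hE; elim: s => [|i s IH].
  have e : (fun x y : T => \sum_(i <- [::]) c i * A i x y) = (fun _ _ => 0).
    by apply: functional_extensionality => x; apply: functional_extensionality => y; rewrite big_nil.
  rewrite e lin0 //.
  by apply: functional_extensionality => x; apply: functional_extensionality => y; rewrite big_nil.
have e : (fun x y : T => \sum_(j <- i :: s) c j * A j x y) =
         (fun x y => c i * A i x y + (fun x y => \sum_(j <- s) c j * A j x y) x y).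
  by apply: functional_extensionality => x; apply: functional_extensionality => y; rewrite big_cons.
rewrite e hE IH.
by apply: functional_extensionality => x; apply: functional_extensionality => y; rewrite big_cons.
Qed.

Lemma op_expand (T : finType) (M : op R T) :
  M = (fun a b => \sum_(p <- index_enum (T * T)%type) M p.1 p.2 * eunit R p.1 p.2 a b).
Proof.
apply: functional_extensionality => a; apply: functional_extensionality => b.
rewrite -[\sum_(p <- _) _]/(\sum_(p : T * T) M p.1 p.2 * eunit R p.1 p.2 a b).
rewrite sum_pair; symmetry.
under eq_bigr => x _ do under eq_bigr => y _ do rewrite eunit_idop mulrA.
under eq_bigr => x _ do rewrite sum_idl.
exact: sum_idl.
Qed.

Lemma lin_expand (T U : finType) (E : op R T -> op R U) (M : op R T) (u v : U) :
  linear_map E ->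
  E M u v = \sum_(x : T) \sum_(y : T) M x y * E (eunit R x y) u v.
Proof.
by move=> hE; rewrite {1}(op_expand M) (lin_sum _ _ _ hE) /= sum_pair.
Qed.

End P1.


Section P2.
Variable R : rcfType.
Local Notation C := (R[i]).

Definition qform (T : finType) (X : op R T) (v : T -> C) : C :=
  \sum_(x : T) \sum_(y : T) (Num.conj (v x)) * X x y * v y.

Lemma psdP (T : finType) (X : op R T) : psd X <-> forall v, 0 <= qform X v.
Proof. by []. Qed.

Lemma sum_reindex (T T' : finType) (F : T -> C) (f : T' -> T) (g : T -> T') :
  cancel f g -> cancel g f -> \sum_(a : T) F a = \sum_(x : T') F (f x).
Proof. by move=> fg gf; rewrite (reindex f) //; exists g => x _. Qed.

Lemma psd_reindex (T T' : finType) (X : op R T) (f : T' -> T) (g : T -> T') :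
  cancel f g -> cancel g f -> psd X -> psd (fun x y => X (f x) (f y)).
Proof.
move=> fg gf hX v; have := hX (fun a => v (g a)).
rewrite (sum_reindex _ fg gf).
under eq_bigr => x _ do rewrite (sum_reindex _ fg gf).
by under eq_bigr => x _ do under eq_bigr => y _ do rewrite !fg.
Qed.

Lemma sum_two (T : finType) (F : T -> C) (s t : C) (x y : T) :
  \sum_(b : T) F b * (s * idop R b x + t * idop R b y) = s * F x + t * F y.
Proof.
under eq_bigr => b _ do rewrite mulrDr !mulrA ![F b * _]mulrC.
rewrite big_split /=.
under eq_bigr => b _ do rewrite -mulrA.
under [X in _ + X]eq_bigr => b _ do rewrite -mulrA.
by rewrite -!big_distrr /= !sum_idr.
Qed.

Lemma conj_idop (T : finType) (a b : T) : Num.conj (idop R a b) = idop R a b.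
Proof. by rewrite /idop; case: (a == b); rewrite ?rmorph1 ?rmorph0. Qed.

Lemma qform_two (T : finType) (X : op R T) (s t : C) (x y : T) :
  qform X (fun a => s * idop R a x + t * idop R a y) =
  Num.conj s * s * X x x + Num.conj s * t * X x y
  + Num.conj t * s * X y x + Num.conj t * t * X y y.
Proof.
rewrite /qform.
under eq_bigr => a _ do rewrite sum_two rmorphD !rmorphM /= !conj_idop.
transitivity (\sum_(a : T) (s * X a x + t * X a y) *
   (Num.conj s * idop R a x + Num.conj t * idop R a y)).
  by apply: eq_bigr => a _; ring.
by rewrite sum_two; ring.
Qed.


Lemma conj_i : Num.conj ('i%C : C) = - 'i%C.
Proof. by apply/eqP; rewrite eq_complex /= oppr0 !eqxx. Qed.

Lemma real_conj (z : C) : 0 <= z -> Num.conj z = z.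
Proof. by move=> h; apply: conj_Creal; apply: ger0_real. Qed.

Lemma psd_diag (T : finType) (X : op R T) x : psd X -> 0 <= X x x.
Proof.
move=> hX; have := hX (fun a => 1 * idop R a x + 0 * idop R a x).
rewrite -/(qform _ _) qform_two rmorph1 rmorph0.
suff -> : 1 * 1 * X x x + 1 * 0 * X x x + 0 * 1 * X x x + 0 * 0 * X x x = X x x by [].
by ring.
Qed.

Lemma psd_herm (T : finType) (X : op R T) x y : psd X -> X y x = Num.conj (X x y).
Proof.
move=> hX.
have hx := real_conj (psd_diag x hX); have hy := real_conj (psd_diag y hX).
have h1 := hX (fun a => 1 * idop R a x + 1 * idop R a y).
rewrite -/(qform _ _) qform_two rmorph1 in h1.
have h2 := hX (fun a => 1 * idop R a x + 'i%C * idop R a y).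
rewrite -/(qform _ _) qform_two rmorph1 conj_i in h2.
move: h1 h2 => /real_conj h1 /real_conj h2.
rewrite !rmorphD !rmorphM rmorph1 /= hx hy in h1.
rewrite !rmorphD !rmorphM rmorph1 !rmorphN /= conj_i opprK hx hy in h2.
set a := X x y in h1 h2 *; set b := X y x in h1 h2 *.
have E1 : a + b - (Num.conj a + Num.conj b) = 0.
  transitivity ((1 * 1 * X x x + 1 * 1 * a + 1 * 1 * b + 1 * 1 * X y y) -
     (1 * 1 * X x x + 1 * 1 * Num.conj a + 1 * 1 * Num.conj b + 1 * 1 * X y y)); first by ring.
  by rewrite -h1 subrr.
have E2 : 'i%C * a - 'i%C * b - (- 'i%C * Num.conj a + 'i%C * Num.conj b) = 0.
  transitivity ((1 * 1 * X x x + 1 * 'i%C * a + - 'i%C * 1 * b + - 'i%C * 'i%C * X y y) -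
    (1 * 1 * X x x + 1 * - 'i%C * Num.conj a + 'i%C * 1 * Num.conj b + 'i%C * - 'i%C * X y y)); first by ring.
  by rewrite -h2 subrr.
have key : 2 * (b - Num.conj a) = (a + b - (Num.conj a + Num.conj b)) +
   'i%C * ('i%C * a - 'i%C * b - (- 'i%C * Num.conj a + 'i%C * Num.conj b))
   - (1 + 'i%C ^+ 2) * (a - b + Num.conj a - Num.conj b) by ring.
rewrite E1 E2 sqr_i addrN mul0r mulr0 addr0 subr0 in key.
by move/eqP: key; rewrite mulf_eq0 pnatr_eq0 /= subr_eq0 => /eqP.
Qed.


Lemma psd_row0 (T : finType) (X : op R T) x y : psd X -> X x x = 0 -> X x y = 0.
Proof.
move=> hX h0.
have hyy := psd_diag y hX.
have hb : X y x = Num.conj (X x y) := psd_herm x y hX.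
have hyyr : Num.conj (X y y) = X y y := real_conj hyy.
case: (eqVneq (X x y) 0) => // ha.
have hn : X x y * Num.conj (X x y) != 0 by rewrite mulf_neq0 // conjC_eq0.
have hnr : Num.conj (X x y * Num.conj (X x y)) = X x y * Num.conj (X x y).
  by rewrite rmorphM /= conjCK mulrC.
have := hX (fun c => (- (X y y + 1) * X x y / (X x y * Num.conj (X x y))) * idop R c x
                     + 1 * idop R c y).
rewrite -/(qform _ _) qform_two h0 hb rmorph1.
have -> : Num.conj (- (X y y + 1) * X x y / (X x y * Num.conj (X x y))) *
   (- (X y y + 1) * X x y / (X x y * Num.conj (X x y))) * 0 +
   Num.conj (- (X y y + 1) * X x y / (X x y * Num.conj (X x y))) * 1 * X x y +
   1 * (- (X y y + 1) * X x y / (X x y * Num.conj (X x y))) * Num.conj (X x y) +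
   1 * 1 * X y y = - (X y y + 2).
  rewrite !rmorphM /= rmorphN /= rmorphD /= rmorph1 hyyr fmorphV /= hnr.
  by field; rewrite /= conjC_eq0 ha.
move=> h.
have h2 : 0 < X y y + 2 by rewrite ltr_wpDl.
have h3 : - (X y y + 2) < 0 by rewrite oppr_lt0.
by have := le_lt_trans h h3; rewrite ltxx.
Qed.


Lemma qform_shift (T : finType) (X : op R T) (v : T -> C) (be : C) x0 :
  qform X (fun a => v a + be * idop R a x0) =
  qform X v + be * (\sum_(a : T) Num.conj (v a) * X a x0)
  + Num.conj be * (\sum_(b : T) X x0 b * v b) + Num.conj be * be * X x0 x0.
Proof.
rewrite /qform.
transitivity (\sum_(a : T) (\sum_(b : T) Num.conj (v a) * X a b * v b
   + be * (Num.conj (v a) * X a x0)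
   + (Num.conj be * \sum_(b : T) X a b * v b) * idop R a x0
   + (Num.conj be * be * X a x0) * idop R a x0)).
  apply: eq_bigr => a _; rewrite rmorphD rmorphM /= conj_idop.
  transitivity (\sum_(b : T) ((Num.conj (v a) * X a b * v b
      + (Num.conj be * (X a b * v b)) * idop R a x0)
      + (be * (Num.conj (v a) * X a b) + Num.conj be * be * X a b * idop R a x0) * idop R b x0)).
    by apply: eq_bigr => b _; ring.
  rewrite big_split /= sum_idr big_split /= -big_distrl /= -big_distrr /=.
  by ring.
rewrite !big_split /= sum_idr sum_idr -big_distrr /=.
by [].
Qed.


Lemma psd_zero_gram (T : finType) (Q : op R T) :
  psd Q -> [set x | Q x x != 0] = set0 ->
  forall x y, Q x y = \sum_(u <- [::]) u x * Num.conj (u y).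
Proof.
move=> hQ e x y; rewrite big_nil; apply: psd_row0 => //.
have : x \in [set x | Q x x != 0] = false by rewrite e inE.
by rewrite inE => /negbFE/eqP.
Qed.

Lemma gram (T : finType) (Q : op R T) : psd Q ->
  exists s : seq (T -> C), forall x y, Q x y = \sum_(u <- s) u x * Num.conj (u y).
Proof.
suff H : forall n (Q : op R T), psd Q -> (#|[set x | Q x x != 0%R]| <= n)%N ->
  exists s : seq (T -> C), forall x y, Q x y = \sum_(u <- s) u x * Num.conj (u y).
  by move=> hQ; apply: (H _ Q hQ (leqnn _)).
elim=> [|n IH] {}Q hQ hc.
  exists [::]; apply: psd_zero_gram => //; apply/eqP; by rewrite -cards_eq0 -leqn0.
case: (eqVneq [set x | Q x x != 0] set0) => hne.
  by exists [::]; apply: psd_zero_gram.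
case/set0Pn: hne => x0; rewrite inE => hx0.
have hq : 0 < Q x0 x0 by rewrite lt0r hx0 psd_diag.
have hqr : Num.conj (Q x0 x0) = Q x0 x0 by apply: real_conj; apply: ltW.
pose r := sqrtC (Q x0 x0).
have hr0 : r != 0 by rewrite sqrtC_eq0.
have hrr : Num.conj r = r by apply: real_conj; rewrite sqrtC_ge0 ltW.
have hr2 : r * r = Q x0 x0 by rewrite -expr2 sqrtCK.
pose u := fun x => Q x x0 / r.
have hcu : forall b, Num.conj (u b) = Q x0 b / r.
  by move=> b; rewrite /u rmorphM fmorphV /= hrr -psd_herm.
pose Q' := fun x y => Q x y - u x * Num.conj (u y).
have hQ' : psd Q'.
  move=> v; change (0 <= qform Q' v).
  pose c := \sum_(b : T) Q x0 b * v b.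
  pose d := \sum_(a : T) Num.conj (v a) * Q a x0.
  have e1 : qform Q' v = qform Q v - d * c / Q x0 x0.
    rewrite -hr2.
    have e0 : d * c / (r * r) = \sum_(a : T) \sum_(b : T)
        Num.conj (v a) * (u a * Num.conj (u b)) * v b.
      rewrite /d /c big_distrl big_distrl /=; apply: eq_bigr => a _.
      rewrite big_distrr big_distrl /=; apply: eq_bigr => b _.
      rewrite hcu /u; field; exact: hr0.
    rewrite e0 /qform /Q' -sumrB; apply: eq_bigr => a _.
    rewrite -sumrB; apply: eq_bigr => b _; ring.
  have e2 : qform Q v - d * c / Q x0 x0 =
            qform Q (fun a => v a + (- c / Q x0 x0) * idop R a x0).
    rewrite qform_shift -/c -/d rmorphM /= fmorphV /= hqr rmorphN /=.
    by field.
  by rewrite e1 e2; apply: hQ.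
have hsub : [set x | Q' x x != 0] \subset [set x | Q x x != 0] :\ x0.
  apply/subsetP => x; rewrite !inE => hx; apply/andP; split.
    apply: contraNneq hx => ->.
    rewrite /Q' hcu /u -hr2; apply/eqP; by field.
  apply: contraNneq hx => hxx.
  by rewrite /Q' hcu /u hxx (psd_row0 x0 hQ hxx) mul0r mul0r subr0.
have hc' : (#|[set x | Q' x x != 0%R]| <= n)%N.
  apply: (leq_trans (subset_leq_card hsub)).
  have := cardsD1 x0 [set x | Q x x != 0]; rewrite inE hx0 /= => e.
  by move: hc; rewrite e add1n ltnS.
case: (IH Q' hQ' hc') => s hs.
exists (u :: s) => x y; rewrite big_cons -hs /Q'; ring.
Qed.


Definition otens (T U : finType) (P : op R T) (Q : op R U) : op R (T * U)%type :=
  fun x y => P x.1 y.1 * Q x.2 y.2.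

Lemma otens_psd (T U : finType) (P : op R T) (Q : op R U) :
  psd P -> psd Q -> psd (otens P Q).
Proof.
move=> hP hQ v; case: (gram hQ) => s hs.
change (0 <= qform (otens P Q) v).
have -> : qform (otens P Q) v =
    \sum_(u <- s) qform P (fun a => \sum_(b : U) Num.conj (u b) * v (a, b)).
  rewrite /qform /otens.
  under eq_bigr => x _ do under eq_bigr => y _ do
    rewrite hs big_distrr /= big_distrr /= big_distrl /=.
  under eq_bigr => x _ do rewrite exchange_big.
  rewrite exchange_big; apply: eq_bigr => u _.
  rewrite sum_pair; apply: eq_bigr => a _.
  under eq_bigr => b _ do rewrite sum_pair.
  rewrite exchange_big; apply: eq_bigr => a' _.
  rewrite rmorph_sum /= big_distrl /= big_distrl /=; apply: eq_bigr => b _.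
  rewrite big_distrr /=; apply: eq_bigr => b' _.
  rewrite rmorphM /= conjCK; ring.
by apply: sumr_ge0 => u _; apply: hP.
Qed.

End P2.


Section P3.
Variable R : rcfType.
Local Notation C := (R[i]).

Definition tens2 (T1 T2 U1 U2 : finType) (E : op R T1 -> op R U1) (F : op R T2 -> op R U2)
  (X : op R (T1 * T2)%type) : op R (U1 * U2)%type :=
  fun u v => \sum_(x : T1 * T2) \sum_(y : T1 * T2)
     X x y * (E (eunit R x.1 y.1) u.1 v.1 * F (eunit R x.2 y.2) u.2 v.2).

Lemma idop_pair (T U : finType) (x y : T * U) :
  idop R x.1 y.1 * idop R x.2 y.2 = idop R x y.
Proof.
case: x y => [a b] [c d]; rewrite /idop /= xpair_eqE.
by case: (a == c); case: (b == d); rewrite ?mulr1 ?mulr0 ?mul0r.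
Qed.

Lemma trace_eunit (T : finType) (x y : T) : trace (eunit R x y) = idop R x y.
Proof.
rewrite /trace; under eq_bigr => a _ do rewrite eunit_idop.
by rewrite sum_idr /idop eq_sym.
Qed.

Lemma tens2_linear (T1 T2 U1 U2 : finType) (E : op R T1 -> op R U1) (F : op R T2 -> op R U2) :
  linear_map (tens2 E F).
Proof.
move=> a X Y; apply: functional_extensionality => u; apply: functional_extensionality => v.
rewrite /tens2 big_distrr /= -big_split /=; apply: eq_bigr => x _.
rewrite big_distrr /= -big_split /=; apply: eq_bigr => y _; ring.
Qed.

Lemma tens2_trace (T1 T2 U1 U2 : finType) (E : op R T1 -> op R U1) (F : op R T2 -> op R U2)
  (X : op R (T1 * T2)%type) :
  (forall M, trace (E M) = trace M) -> (forall M, trace (F M) = trace M) ->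
  trace (tens2 E F X) = trace X.
Proof.
move=> hE hF; rewrite /trace /tens2 exchange_big /=.
apply: eq_bigr => x _; rewrite exchange_big /=.
under eq_bigr => y _ do rewrite -mulr_sumr.
have e : forall y : T1 * T2, \sum_(i : U1 * U2) E (eunit R x.1 y.1) i.1 i.1 * F (eunit R x.2 y.2) i.2 i.2
   = idop R x y.
  move=> y; rewrite sum_pair /=.
  under eq_bigr => a _ do rewrite -big_distrr /=.
  rewrite -big_distrl /=.
  have := hE (eunit R x.1 y.1); rewrite /trace => ->.
  have := hF (eunit R x.2 y.2); rewrite /trace => ->.
  by rewrite -!/(trace _) !trace_eunit idop_pair.
under eq_bigr => y _ do rewrite e.
exact: sum_idl.
Qed.

Lemma channel_psd (T U : finType) (E : op R T -> op R U) (X : op R T) :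
  channel E -> psd X -> psd (E X).
Proof.
case=> _ _ hcp hX.
have hX' : psd (fun x y : unit * T => X x.2 y.2).
  apply: (psd_reindex (g := fun t => (tt, t))) => //; by case=> [[] t].
have := psd_reindex (f := fun u : U => (tt, u)) (g := snd) (fun u => erefl u) _ (hcp _ _ hX').
by apply; case=> [[] t].
Qed.


Lemma tens2_ampl (K T1 T2 U1 U2 : finType) (E : op R T1 -> op R U1) (F : op R T2 -> op R U2)
  (X : op R (K * (T1 * T2))%type) :
  linear_map E -> linear_map F ->
  ampl (tens2 E F) X =
  (fun x y => ampl E (fun x' y' : (K * U2) * T1 =>
       ampl F (fun x'' y'' : (K * T1) * T2 =>
           X (x''.1.1, (x''.1.2, x''.2)) (y''.1.1, (y''.1.2, y''.2)))
         ((x'.1.1, x'.2), x'.1.2) ((y'.1.1, y'.2), y'.1.2))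
     ((x.1, x.2.2), x.2.1) ((y.1, y.2.2), y.2.1)).
Proof.
move=> hE hF; apply: functional_extensionality => -[k [u1 u2]].
apply: functional_extensionality => -[k' [v1 v2]].
rewrite /ampl /= (lin_expand (E := E)) //.
under [RHS]eq_bigr => t1 _ do under eq_bigr => t1' _ do rewrite (lin_expand (E := F)) //= big_distrl /=.
rewrite /tens2 /= sum_pair; apply: eq_bigr => t1 _.
have hp : forall b : T2, \sum_(y : T1 * T2) X (k, (t1, b)) (k', y) *
        (E (eunit R (t1, b).1 y.1) u1 v1 * F (eunit R (t1, b).2 y.2) u2 v2)
   = \sum_(t1' : T1) \sum_(t2' : T2) X (k, (t1, b)) (k', (t1', t2')) *
        (E (eunit R t1 t1') u1 v1 * F (eunit R b t2') u2 v2).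
  by move=> b; rewrite sum_pair.
under [LHS]eq_bigr => t2 _ do rewrite hp.
rewrite sumC; apply: eq_bigr => t1' _.
apply: eq_bigr => t2 _; rewrite big_distrl /=; apply: eq_bigr => t2' _; ring.
Qed.


Lemma channel_tens2 (T1 T2 U1 U2 : finType) (E : op R T1 -> op R U1) (F : op R T2 -> op R U2) :
  channel E -> channel F -> channel (tens2 E F).
Proof.
move=> hE hF; have hE' := hE; have hF' := hF.
case: hE' => lE tE cE; case: hF' => lF tF cF.
split; first exact: tens2_linear.
  by move=> X; apply: tens2_trace.
move=> K X hX; rewrite tens2_ampl //.
apply: (psd_reindex (f := fun x : K * (U1 * U2) => ((x.1, x.2.2), x.2.1))
                    (g := fun z => (z.1.1, (z.2, z.1.2)))); [by case=> ? [] | by case=> [[]] | ].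
apply: cE.
apply: (psd_reindex (f := fun x : (K * U2) * T1 => ((x.1.1, x.2), x.1.2))
                    (g := fun z => ((z.1.1, z.2), z.1.2))); [by case=> [[]] | by case=> [[]] | ].
apply: cF.
apply: (psd_reindex (f := fun x : (K * T1) * T2 => (x.1.1, (x.1.2, x.2)))
                    (g := fun z => ((z.1, z.2.1), z.2.2))); [by case=> [[]] | by case=> ? [] | ].
exact: hX.
Qed.

End P3.


Section P4.
Variable R : rcfType.
Local Notation C := (R[i]).

Definition gexp (T U : finType) (O : op R U) (E : op R T -> op R U) : T -> T -> C :=
  fun x y => expect O (E (eunit R x y)).
Definition NF (T : finType) (X : op R T) (g : T -> T -> C) : C :=
  \sum_(x : T) \sum_(y : T) X x y * g x y.
Definition G2 (T1 T2 : finType) (g1 : T1 -> T1 -> C) (g2 : T2 -> T2 -> C) :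
  (T1 * T2)%type -> (T1 * T2)%type -> C := fun x y => g1 x.1 y.1 * g2 x.2 y.2.

Lemma NF_split (T1 T2 : finType) (X : op R (T1 * T2)%type) g :
  NF X g = \sum_(a : T1) \sum_(c : T1) \sum_(b : T2) \sum_(d : T2) X (a, b) (c, d) * g (a, b) (c, d).
Proof.
rewrite /NF sum_pair; apply: eq_bigr => a _.
under eq_bigr => b _ do rewrite sum_pair.
by rewrite sumC.
Qed.

Lemma sum_prod2 (A B : finType) (f : A -> A -> C) (g : B -> B -> C) :
  \sum_(u : A * B) \sum_(v : A * B) f u.1 v.1 * g u.2 v.2 =
  (\sum_(a : A) \sum_(a' : A) f a a') * (\sum_(b : B) \sum_(b' : B) g b b').
Proof.
transitivity (NF (fun _ _ => 1) (G2 f g)).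
  by rewrite /NF; apply: eq_bigr => u _; apply: eq_bigr => v _; rewrite mul1r.
rewrite NF_split /= big_distrl /=.
apply: eq_bigr => a _; rewrite big_distrl /=; apply: eq_bigr => a' _.
rewrite big_distrr /=; apply: eq_bigr => b _.
rewrite big_distrr /=; apply: eq_bigr => b' _.
by rewrite /G2 /= mul1r.
Qed.

Lemma expect_tens2 (T1 T2 U1 U2 : finType) (E : op R T1 -> op R U1) (F : op R T2 -> op R U2)
  (O1 : op R U1) (O2 : op R U2) (X : op R (T1 * T2)%type) :
  expect (otens O1 O2) (tens2 E F X) = NF X (G2 (gexp O1 E) (gexp O2 F)).
Proof.
rewrite /expect /NF /tens2.
under eq_bigr => u _ do under eq_bigr => v _ do rewrite big_distrr /=.
under eq_bigr => u _ do rewrite sumC.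
rewrite sumC; apply: eq_bigr => x _.
under eq_bigr => u _ do under eq_bigr => v _ do rewrite big_distrr /=.
under eq_bigr => u _ do rewrite sumC.
rewrite sumC; apply: eq_bigr => y _.
transitivity (X x y * \sum_(u : U1 * U2) \sum_(v : U1 * U2)
    (O1 u.1 v.1 * E (eunit R x.1 y.1) v.1 u.1) * (O2 u.2 v.2 * F (eunit R x.2 y.2) v.2 u.2)).
  rewrite big_distrr /=; apply: eq_bigr => u _.
  rewrite big_distrr /=; apply: eq_bigr => v _.
  rewrite /otens; ring.
by rewrite (sum_prod2 (fun a a' => O1 a a' * E (eunit R x.1 y.1) a' a)
                    (fun b b' => O2 b b' * F (eunit R x.2 y.2) b' b)).
Qed.

Lemma NF_eunit (T : finType) (x y : T) (g : T -> T -> C) : NF (eunit R x y) g = g x y.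
Proof.
rewrite /NF.
transitivity (\sum_(a : T) \sum_(b : T) (g a b * idop R a x) * idop R b y).
  by apply: eq_bigr => a _; apply: eq_bigr => b _; rewrite eunit_idop; ring.
under eq_bigr => a _ do rewrite sum_idr.
by rewrite sum_idr.
Qed.

Lemma gexp_tens2 (T1 T2 U1 U2 : finType) (E : op R T1 -> op R U1) (F : op R T2 -> op R U2)
  (O1 : op R U1) (O2 : op R U2) :
  gexp (otens O1 O2) (tens2 E F) = G2 (gexp O1 E) (gexp O2 F).
Proof.
apply: functional_extensionality => x; apply: functional_extensionality => y.
by rewrite /gexp expect_tens2 NF_eunit.
Qed.

Lemma expect_idop (T : finType) (M : op R T) : expect (@idop R T) M = trace M.
Proof.
rewrite /expect /trace; apply: eq_bigr => a _.
under eq_bigr => b _ do rewrite mulrC.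
by rewrite sum_idl.
Qed.

Lemma gexp_id (T U : finType) (E : op R T -> op R U) :
  channel E -> gexp (@idop R U) E = @idop R T.
Proof.
case=> _ hT _; apply: functional_extensionality => x; apply: functional_extensionality => y.
by rewrite /gexp expect_idop hT trace_eunit.
Qed.

Lemma NF_ext (T : finType) (X X' : op R T) g :
  (forall x y, X x y = X' x y) -> NF X g = NF X' g.
Proof. by move=> h; rewrite /NF; apply: eq_bigr => x _; apply: eq_bigr => y _; rewrite h. Qed.

Definition ptr2 (T1 T2 : finType) (X : op R (T1 * T2)%type) : op R T1 :=
  fun a b => \sum_(p : T2) X (a, p) (b, p).
Definition ptr1 (T1 T2 : finType) (X : op R (T1 * T2)%type) : op R T2 :=
  fun a b => \sum_(p : T1) X (p, a) (p, b).
Definition swapX (T1 T2 : finType) (X : op R (T1 * T2)%type) : op R (T2 * T1)%type :=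
  fun x y => X (x.2, x.1) (y.2, y.1).
Definition assocX (T1 T2 T3 : finType) (X : op R ((T1 * T2) * T3)%type) :
  op R (T1 * (T2 * T3))%type :=
  fun x y => X ((x.1, x.2.1), x.2.2) ((y.1, y.2.1), y.2.2).
Definition ptrm (T1 T2 T3 : finType) (X : op R (T1 * (T2 * T3))%type) : op R (T1 * T3)%type :=
  fun x y => \sum_(p : T2) X (x.1, (p, x.2)) (y.1, (p, y.2)).

Lemma NF_id_r (T1 T2 : finType) (X : op R (T1 * T2)%type) g :
  NF X (G2 g (@idop R T2)) = NF (ptr2 X) g.
Proof.
rewrite NF_split /NF; apply: eq_bigr => a _; apply: eq_bigr => c _.
rewrite /ptr2 big_distrl /=; apply: eq_bigr => b _.
rewrite /G2 /=.
under eq_bigr => d _ do rewrite mulrA.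
by rewrite sum_idl.
Qed.

Lemma NF_swap (T1 T2 : finType) (X : op R (T1 * T2)%type) g1 g2 :
  NF X (G2 g1 g2) = NF (swapX X) (G2 g2 g1).
Proof.
rewrite /NF (sum_reindex _ (f := fun z : T2 * T1 => (z.2, z.1)) (g := fun z => (z.2, z.1)));
  [|by case|by case].
apply: eq_bigr => x _.
rewrite (sum_reindex _ (f := fun z : T2 * T1 => (z.2, z.1)) (g := fun z => (z.2, z.1)));
  [|by case|by case].
apply: eq_bigr => y _; by rewrite /G2 /swapX /= [g1 _ _ * _]mulrC.
Qed.

Lemma NF_id_l (T1 T2 : finType) (X : op R (T1 * T2)%type) g :
  NF X (G2 (@idop R T1) g) = NF (ptr1 X) g.
Proof. by rewrite NF_swap NF_id_r. Qed.

Lemma NF_assoc (T1 T2 T3 : finType) (X : op R ((T1 * T2) * T3)%type) g1 g2 g3 :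
  NF X (G2 (G2 g1 g2) g3) = NF (assocX X) (G2 g1 (G2 g2 g3)).
Proof.
rewrite /NF (sum_reindex _ (f := fun z : T1 * (T2 * T3) => ((z.1, z.2.1), z.2.2))
                           (g := fun z => (z.1.1, (z.1.2, z.2)))); [|by move=> [a [b c]]|by move=> [[a b] c]].
apply: eq_bigr => x _.
rewrite (sum_reindex _ (f := fun z : T1 * (T2 * T3) => ((z.1, z.2.1), z.2.2))
                           (g := fun z => (z.1.1, (z.1.2, z.2)))); [|by move=> [a [b c]]|by move=> [[a b] c]].
apply: eq_bigr => y _; by rewrite /G2 /assocX /= !mulrA.
Qed.

Lemma NF_slice (T1 T2 : finType) (X : op R (T1 * T2)%type) g1 g2 :
  NF X (G2 g1 g2) = \sum_(a : T1) \sum_(c : T1) g1 a c * NF (fun b d => X (a, b) (c, d)) g2.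
Proof.
rewrite NF_split; apply: eq_bigr => a _; apply: eq_bigr => c _.
rewrite /NF big_distrr /=; apply: eq_bigr => b _.
rewrite big_distrr /=; apply: eq_bigr => d _.
by rewrite /G2 /=; ring.
Qed.

Lemma NF_mid (T1 T2 T3 : finType) (X : op R (T1 * (T2 * T3))%type) g1 g2 :
  NF X (G2 g1 (G2 (@idop R T2) g2)) = NF (ptrm X) (G2 g1 g2).
Proof.
rewrite !NF_slice; apply: eq_bigr => a _; apply: eq_bigr => c _.
by rewrite NF_id_l.
Qed.

Lemma NF_prod (T1 T2 : finType) (X : op R (T1 * T2)%type) (X1 : op R T1) (X2 : op R T2) g1 g2 :
  (forall x y, X x y = X1 x.1 y.1 * X2 x.2 y.2) ->
  NF X (G2 g1 g2) = NF X1 g1 * NF X2 g2.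
Proof.
move=> h; rewrite NF_slice.
transitivity (\sum_(a : T1) \sum_(c : T1) (X1 a c * g1 a c) * NF X2 g2).
  apply: eq_bigr => a _; apply: eq_bigr => c _.
  have -> : NF (fun b d => X (a, b) (c, d)) g2 = X1 a c * NF X2 g2.
    rewrite /NF big_distrr /=; apply: eq_bigr => b _.
    rewrite big_distrr /=; apply: eq_bigr => d _; rewrite h /=; ring.
  ring.
rewrite [in RHS]/NF big_distrl /=; apply: eq_bigr => a _.
by rewrite big_distrl.
Qed.

Lemma NF_trace (T : finType) (X : op R T) : NF X (@idop R T) = trace X.
Proof. by rewrite /NF /trace; apply: eq_bigr => x _; rewrite sum_idl. Qed.

End P4.


Section P5.
Variable R : rcfType.
Local Notation C := (R[i]).

Definition mulop (T : finType) (P Q : op R T) : op R T :=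
  fun x y => \sum_(z : T) P x z * Q z y.
Definition herm (T : finType) (O : op R T) := forall x y, Num.conj (O x y) = O y x.

Lemma idopC (T : finType) (x y : T) : idop R x y = idop R y x.
Proof. by rewrite /idop eq_sym. Qed.

Lemma key_ineq (T : finType) (tau O : op R T) (S : C) :
  psd tau -> trace tau = 1 -> herm O -> Num.conj S = S ->
  (forall x y, mulop O O x y = S * idop R x y) -> expect O tau = S ->
  0 <= S - S ^+ 2.
Proof.
move=> hp ht hO hS hOO he.
pose Q := fun k x => S * idop R k x - O k x.
have inner : forall x y, \sum_(k : T) Q k x * Num.conj (Q k y) =
    (S ^+ 2 + S) * idop R x y - 2 * S * O y x.
  move=> x y.
  transitivity (\sum_(k : T) ((S ^+ 2 * idop R k y) * idop R k x + (- S * O y k) * idop R k x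
        + (- S * O k x) * idop R k y + O y k * O k x)).
    apply: eq_bigr => k _; rewrite /Q rmorphB rmorphM /= hS conj_idop hO; ring.
  rewrite !big_split /= !sum_idr.
  rewrite -[\sum_(k : T) O y k * O k x]/(mulop O O y x) hOO idopC; ring.
have h0 : 0 <= \sum_(k : T) \sum_(x : T) \sum_(y : T) Q k x * tau x y * Num.conj (Q k y).
  apply: sumr_ge0 => k _.
  have := hp (fun y => Num.conj (Q k y)).
  by under eq_bigr => x _ do under eq_bigr => y _ do rewrite conjCK.
have e : \sum_(k : T) \sum_(x : T) \sum_(y : T) Q k x * tau x y * Num.conj (Q k y) =
         \sum_(x : T) \sum_(y : T) tau x y * ((S ^+ 2 + S) * idop R x y - 2 * S * O y x).
  rewrite sumC; apply: eq_bigr => x _.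
  rewrite sumC; apply: eq_bigr => y _.
  rewrite -inner big_distrr /=; apply: eq_bigr => k _; ring.
rewrite e in h0.
have e2 : \sum_(x : T) \sum_(y : T) tau x y * ((S ^+ 2 + S) * idop R x y - 2 * S * O y x) =
   (S ^+ 2 + S) * (\sum_(x : T) \sum_(y : T) tau x y * idop R x y)
   - 2 * S * (\sum_(x : T) \sum_(y : T) O y x * tau x y).
  rewrite big_distrr /= big_distrr /= -sumrB; apply: eq_bigr => x _.
  rewrite big_distrr /= big_distrr /= -sumrB; apply: eq_bigr => y _; ring.
rewrite e2 in h0.
have e3 : \sum_(x : T) \sum_(y : T) tau x y * idop R x y = 1.
  by rewrite -ht /trace; apply: eq_bigr => x _; rewrite sum_idl.
have e4 : \sum_(x : T) \sum_(y : T) O y x * tau x y = S by rewrite -he /expect sumC.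
rewrite e3 e4 in h0.
suff -> : S - S ^+ 2 = (S ^+ 2 + S) * 1 - 2 * S * S by [].
ring.
Qed.


Lemma expect_real (T : finType) (tau O : op R T) :
  psd tau -> herm O -> Num.conj (expect O tau) = expect O tau.
Proof.
move=> hp hO; rewrite /expect rmorph_sum /= sumC; apply: eq_bigr => a _.
rewrite rmorph_sum /=; apply: eq_bigr => b _.
by rewrite rmorphM /= hO -(psd_herm _ _ hp).
Qed.

Lemma mulop_lin3 (T : finType) (O1 O2 O3 : op R T) (c1 c2 c3 : C) x y :
  mulop (fun x y => c1 * O1 x y + c2 * O2 x y + c3 * O3 x y)
        (fun x y => c1 * O1 x y + c2 * O2 x y + c3 * O3 x y) x y =
  c1 ^+ 2 * mulop O1 O1 x y + c2 ^+ 2 * mulop O2 O2 x y + c3 ^+ 2 * mulop O3 O3 x y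
     + c1 * c2 * (mulop O1 O2 x y + mulop O2 O1 x y)
     + c1 * c3 * (mulop O1 O3 x y + mulop O3 O1 x y)
     + c2 * c3 * (mulop O2 O3 x y + mulop O3 O2 x y).
Proof.
rewrite /mulop !mulrDr !big_distrr /= -!big_split /=; apply: eq_bigr => z _; ring.
Qed.

Lemma expect_lin3 (T : finType) (O1 O2 O3 tau : op R T) (c1 c2 c3 : C) :
  expect (fun x y => c1 * O1 x y + c2 * O2 x y + c3 * O3 x y) tau =
  c1 * expect O1 tau + c2 * expect O2 tau + c3 * expect O3 tau.
Proof.
rewrite /expect !big_distrr /= -!big_split /=; apply: eq_bigr => a _.
rewrite !big_distrr /= -!big_split /=; apply: eq_bigr => b _; ring.
Qed.

Lemma real_sq_ge0 (c : C) : Num.conj c = c -> 0 <= c ^+ 2.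
Proof. move=> h; have hr : c \is Num.real by apply/CrealP. by move: hr; rewrite realEsqr. Qed.

Lemma anti3 (T : finType) (tau O1 O2 O3 : op R T) :
  psd tau -> trace tau = 1 -> herm O1 -> herm O2 -> herm O3 ->
  (forall x y, mulop O1 O1 x y = idop R x y) ->
  (forall x y, mulop O2 O2 x y = idop R x y) ->
  (forall x y, mulop O3 O3 x y = idop R x y) ->
  (forall x y, mulop O1 O2 x y + mulop O2 O1 x y = 0) ->
  (forall x y, mulop O1 O3 x y + mulop O3 O1 x y = 0) ->
  (forall x y, mulop O2 O3 x y + mulop O3 O2 x y = 0) ->
  expect O1 tau ^+ 2 + expect O2 tau ^+ 2 + expect O3 tau ^+ 2 <= 1.
Proof.
move=> hp ht h1 h2 h3 s1 s2 s3 a12 a13 a23.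
set c1 := expect O1 tau; set c2 := expect O2 tau; set c3 := expect O3 tau.
have r1 : Num.conj c1 = c1 by apply: expect_real.
have r2 : Num.conj c2 = c2 by apply: expect_real.
have r3 : Num.conj c3 = c3 by apply: expect_real.
set S := c1 ^+ 2 + c2 ^+ 2 + c3 ^+ 2.
pose O := fun x y => c1 * O1 x y + c2 * O2 x y + c3 * O3 x y.
have hO : herm O.
  move=> x y; rewrite /O !rmorphD !rmorphM /= r1 r2 r3 h1 h2 h3 //.
have hS : Num.conj S = S by rewrite /S !rmorphD !rmorphXn /= r1 r2 r3.
have hOO : forall x y, mulop O O x y = S * idop R x y.
  move=> x y; rewrite /O mulop_lin3.
  rewrite s1 s2 s3 a12 a13 a23 /S; ring.
have hE : expect O tau = S.
  by rewrite /O expect_lin3 -/c1 -/c2 -/c3 /S; ring.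
have key := key_ineq hp ht hO hS hOO hE.
have hS0 : 0 <= S.
  have q1 := real_sq_ge0 r1; have q2 := real_sq_ge0 r2; have q3 := real_sq_ge0 r3.
  by rewrite /S !addr_ge0.
case: (eqVneq S 0) => [->|hn]; first by rewrite ler01.
have hpos : 0 < S by rewrite lt0r hn hS0.
have : 0 <= S * (1 - S) by rewrite (_ : S * (1 - S) = S - S ^+ 2) //; ring.
by rewrite pmulr_rge0 // subr_ge0.
Qed.

End P5.


Section P6.
Variable R : rcfType.
Local Notation C := (R[i]).

Lemma sum2_mul (U V : finType) (K : C) (f : U -> C) (g : V -> C) :
  \sum_(u : U) \sum_(v : V) K * f u * g v = K * (\sum_(u : U) f u) * (\sum_(v : V) g v).
Proof.
under eq_bigr => u _ do rewrite -big_distrr /=.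
by rewrite -big_distrl /= -big_distrr.
Qed.

Lemma sum2_fact (U V : finType) (F : U -> V -> C) (K : C) (f : U -> C) (g : V -> C) (cf cg : C) :
  (forall u v, F u v = K * f u * g v) -> \sum_(u : U) f u = cf -> \sum_(v : V) g v = cg ->
  \sum_(u : U) \sum_(v : V) F u v = K * cf * cg.
Proof.
move=> h hf hg; rewrite -hf -hg -sum2_mul.
by apply: eq_bigr => u _; apply: eq_bigr => v _; rewrite h.
Qed.

Lemma trace_ptr1 (T U : finType) (r : op R (T * U)%type) : trace (ptr1 r) = trace r.
Proof. by rewrite /trace /ptr1 sum_pair sumC. Qed.
Lemma trace_ptr2 (T U : finType) (r : op R (T * U)%type) : trace (ptr2 r) = trace r.
Proof. by rewrite /trace /ptr2 sum_pair. Qed.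

Variables (A1 A2 B1 B2 C1 C2 D1 D2 : finType).
Variables (rAB : op R (A1 * B1)%type) (rBC : op R (B2 * C1)%type)
          (rCD : op R (C2 * D1)%type) (rDA : op R (D2 * A2)%type).
Hypotheses (tAB : trace rAB = 1) (tBC : trace rBC = 1) (tCD : trace rCD = 1) (tDA : trace rDA = 1).

Local Notation mA1 := (ptr2 rAB). Local Notation mB1 := (ptr1 rAB).
Local Notation mB2 := (ptr2 rBC). Local Notation mC1 := (ptr1 rBC).
Local Notation mC2 := (ptr2 rCD). Local Notation mD1 := (ptr1 rCD).
Local Notation mD2 := (ptr2 rDA). Local Notation mA2 := (ptr1 rDA).

Local Notation S4 := (square_sources rAB rBC rCD rDA).

(* parties A, B, C, D', D'' *)
Definition S5 : op R ((((A1 * A2) * (B1 * B2)) * (C1 * C2)) * (D1 * D2) * (D1 * D2))%type :=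
  fun x y =>
    rAB (x.1.1.1.1.1, x.1.1.1.2.1) (y.1.1.1.1.1, y.1.1.1.2.1)
  * rBC (x.1.1.1.2.2, x.1.1.2.1) (y.1.1.1.2.2, y.1.1.2.1)
  * rCD (x.1.1.2.2, x.1.2.1) (y.1.1.2.2, y.1.2.1)
  * rDA (x.2.2, x.1.1.1.1.2) (y.2.2, y.1.1.1.1.2)
  * mD2 x.1.2.2 y.1.2.2
  * mD1 x.2.1 y.2.1.

Definition S6 := otens S5 (otens mD1 mD2).
Definition S5b := otens S4 (otens mC1 mC2).

Lemma tmD1 : trace mD1 = 1. Proof. by rewrite trace_ptr1. Qed.
Lemma tmD2 : trace mD2 = 1. Proof. by rewrite trace_ptr2. Qed.
Lemma tmC1 : trace mC1 = 1. Proof. by rewrite trace_ptr1. Qed.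
Lemma tmC2 : trace mC2 = 1. Proof. by rewrite trace_ptr2. Qed.

Lemma ptr2_otens1 (T U V W : finType) (X : op R T) (P : op R U) (Q : op R V) x y :
  trace P = 1 -> trace Q = 1 -> ptr2 (otens X (otens P Q)) x y = X x y.
Proof.
move=> hP hQ; rewrite /ptr2 /otens /= -big_distrr /=.
rewrite (_ : \sum_(p : U * V) P p.1 p.1 * Q p.2 p.2 = trace P * trace Q).
  by rewrite hP hQ !mulr1.
by rewrite /trace sum_pair big_distrl /=; apply: eq_bigr => u _; rewrite big_distrr.
Qed.



Definition S4a : op R (((A1 * A2) * (B1 * B2)) * (C1 * C2) * (D1 * D2))%type :=
  fun x y =>
    rAB (x.1.1.1.1, x.1.1.2.1) (y.1.1.1.1, y.1.1.2.1)
  * rBC (x.1.1.2.2, x.1.2.1) (y.1.1.2.2, y.1.2.1)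
  * rCD (x.1.2.2, x.2.1) (y.1.2.2, y.2.1)
  * mA2 x.1.1.1.2 y.1.1.1.2
  * mD2 x.2.2 y.2.2.

Definition S3a : op R (((A1 * A2) * (B1 * B2)) * (C1 * C2))%type :=
  fun x y =>
    rAB (x.1.1.1, x.1.2.1) (y.1.1.1, y.1.2.1)
  * rBC (x.1.2.2, x.2.1) (y.1.2.2, y.2.1)
  * mC2 x.2.2 y.2.2
  * mA2 x.1.1.2 y.1.1.2.

Definition S2a : op R ((A1 * A2) * (B1 * B2))%type :=
  fun x y => rAB (x.1.1, x.2.1) (y.1.1, y.2.1) * mB2 x.2.2 y.2.2 * mA2 x.1.2 y.1.2.

Definition W2 : op R ((B1 * B2) * ((C1 * C2) * (D1 * D2)))%type :=
  fun x y => mB1 x.1.1 y.1.1 * rBC (x.1.2, x.2.1.1) (y.1.2, y.2.1.1)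
           * rCD (x.2.1.2, x.2.2.1) (y.2.1.2, y.2.2.1) * mD2 x.2.2.2 y.2.2.2.

Definition S4c : op R ((((A1 * A2) * (B1 * B2)) * (C1 * C2)) * (D1 * D2))%type :=
  fun x y =>
    rAB (x.1.1.1.1, x.1.1.2.1) (y.1.1.1.1, y.1.1.2.1)
  * rBC (x.1.1.2.2, x.1.2.1) (y.1.1.2.2, y.1.2.1)
  * mC2 x.1.2.2 y.1.2.2
  * rDA (x.2.2, x.1.1.1.2) (y.2.2, y.1.1.1.2)
  * mD1 x.2.1 y.2.1.

Definition W3 : op R (((A1 * A2) * (B1 * B2)) * (D1 * D2))%type :=
  fun x y =>
    rAB (x.1.1.1, x.1.2.1) (y.1.1.1, y.1.2.1)
  * mB2 x.1.2.2 y.1.2.2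
  * rDA (x.2.2, x.1.1.2) (y.2.2, y.1.1.2)
  * mD1 x.2.1 y.2.1.

Lemma E1 : ptr2 S5 = S4a.
Proof.
apply: functional_extensionality => -[[[[a1 a2] [b1 b2]] [c1 c2]] [e1 e2]].
apply: functional_extensionality => -[[[[a1' a2'] [b1' b2']] [c1' c2']] [e1' e2']].
rewrite /ptr2 sum_pair /=.
rewrite (sum2_fact (K := rAB (a1,b1) (a1',b1') * rBC (b2,c1) (b2',c1') * rCD (c2,e1) (c2',e1') * mD2 e2 e2') (f := fun h => mD1 h h) (g := fun h => rDA (h, a2) (h, a2')) (cf := 1) (cg := mA2 a2 a2')).
- by rewrite /S4a /=; ring.
- by move=> u v; rewrite /S5 /=; ring.
- exact: tmD1.
- by [].
Qed.

Lemma E2 : ptr2 S4a = S3a.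
Proof.
apply: functional_extensionality => -[[[a1 a2] [b1 b2]] [c1 c2]].
apply: functional_extensionality => -[[[a1' a2'] [b1' b2']] [c1' c2']].
rewrite /ptr2 sum_pair /=.
rewrite (sum2_fact (K := rAB (a1,b1) (a1',b1') * rBC (b2,c1) (b2',c1') * mA2 a2 a2') (f := fun h => rCD (c2, h) (c2', h)) (g := fun h => mD2 h h) (cf := mC2 c2 c2') (cg := 1)).
- by rewrite /S3a /=; ring.
- by move=> u v; rewrite /S4a /=; ring.
- by [].
- exact: tmD2.
Qed.

Lemma E3 : ptr2 S3a = S2a.
Proof.
apply: functional_extensionality => -[[a1 a2] [b1 b2]].
apply: functional_extensionality => -[[a1' a2'] [b1' b2']].
rewrite /ptr2 sum_pair /=.
rewrite (sum2_fact (K := rAB (a1,b1) (a1',b1') * mA2 a2 a2') (f := fun h => rBC (b2, h) (b2', h)) (g := fun h => mC2 h h) (cf := mB2 b2 b2') (cg := 1)).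
- by rewrite /S2a /=; ring.
- by move=> u v; rewrite /S3a /=; ring.
- by [].
- exact: tmC2.
Qed.

Lemma E4 : ptr1 S2a = otens mB1 mB2.
Proof.
apply: functional_extensionality => -[b1 b2].
apply: functional_extensionality => -[b1' b2'].
rewrite /ptr1 sum_pair /=.
rewrite (sum2_fact (K := mB2 b2 b2') (f := fun h => rAB (h, b1) (h, b1')) (g := fun h => mA2 h h)  (cf := mB1 b1 b1') (cg := 1)).
- by rewrite /otens /= -/(ptr1 rAB b1 b1') -/(ptr2 rBC b2 b2'); ring.
- by move=> u v; rewrite /S2a /=; ring.
- by [].
- exact: etrans (trace_ptr1 rDA) tDA.
Qed.

Lemma E5 : ptr2 S4 = S3a.
Proof.
apply: functional_extensionality => -[[[a1 a2] [b1 b2]] [c1 c2]].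
apply: functional_extensionality => -[[[a1' a2'] [b1' b2']] [c1' c2']].
rewrite /ptr2 sum_pair /=.
rewrite (sum2_fact (K := rAB (a1,b1) (a1',b1') * rBC (b2,c1) (b2',c1')) (f := fun h => rCD (c2, h) (c2', h)) (g := fun h => rDA (h, a2) (h, a2')) (cf := mC2 c2 c2') (cg := mA2 a2 a2')).
- by rewrite /S3a /=; ring.
- by move=> u v; rewrite /square_sources /=; ring.
- by [].
- by [].
Qed.

Lemma E6 : ptr2 S2a = otens mA1 mA2.
Proof.
apply: functional_extensionality => -[a1 a2].
apply: functional_extensionality => -[a1' a2'].
rewrite /ptr2 sum_pair /=.
rewrite (sum2_fact (K := mA2 a2 a2') (f := fun h => rAB (a1, h) (a1', h)) (g := fun h => mB2 h h) (cf := mA1 a1 a1') (cg := 1)).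
- by rewrite /otens /= -/(ptr2 rAB a1 a1') -/(ptr1 rDA a2 a2'); ring.
- by move=> u v; rewrite /S2a /=; ring.
- by [].
- exact: etrans (trace_ptr2 rBC) tBC.
Qed.

Lemma E7 : ptr1 (assocX (assocX S4a)) = W2.
Proof.
apply: functional_extensionality => -[[b1 b2] [[c1 c2] [d1 d2]]].
apply: functional_extensionality => -[[b1' b2'] [[c1' c2'] [d1' d2']]].
rewrite /ptr1 /assocX sum_pair /=.
rewrite (sum2_fact (K := rBC (b2,c1) (b2',c1') * rCD (c2,d1) (c2',d1') * mD2 d2 d2') (f := fun h => rAB (h, b1) (h, b1')) (g := fun h => mA2 h h)  (cf := mB1 b1 b1') (cg := 1)).
- by rewrite /W2 /=; ring.
- by move=> u v; rewrite /S4a /=; ring.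
- by [].
- exact: etrans (trace_ptr1 rDA) tDA.
Qed.

Lemma E8 : ptr1 (assocX (assocX S4)) = W2.
Proof.
apply: functional_extensionality => -[[b1 b2] [[c1 c2] [d1 d2]]].
apply: functional_extensionality => -[[b1' b2'] [[c1' c2'] [d1' d2']]].
rewrite /ptr1 /assocX sum_pair /=.
rewrite (sum2_fact (K := rBC (b2,c1) (b2',c1') * rCD (c2,d1) (c2',d1')) (f := fun h => rAB (h, b1) (h, b1')) (g := fun h => rDA (d2, h) (d2', h)) (cf := mB1 b1 b1') (cg := mD2 d2 d2')).
- by rewrite /W2 /=; ring.
- by move=> u v; rewrite /square_sources /=; ring.
- by [].
- by [].
Qed.

Lemma E9 : ptrm W2 = (fun x y => otens mB1 mB2 x.1 y.1 * otens mD1 mD2 x.2 y.2).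
Proof.
apply: functional_extensionality => -[[b1 b2] [d1 d2]].
apply: functional_extensionality => -[[b1' b2'] [d1' d2']].
rewrite /ptrm sum_pair /=.
rewrite (sum2_fact (K := mB1 b1 b1' * mD2 d2 d2') (f := fun h => rBC (b2, h) (b2', h)) (g := fun h => rCD (h, d1) (h, d1')) (cf := mB2 b2 b2') (cg := mD1 d1 d1')).
- by rewrite /otens /= -/(ptr1 rAB b1 b1') -/(ptr2 rBC b2 b2') -/(ptr1 rCD d1 d1') -/(ptr2 rDA d2 d2'); ring.
- by move=> u v; rewrite /W2 /=; ring.
- by [].
- by [].
Qed.

Lemma E10 : ptrm (assocX S5) = S4c.
Proof.
apply: functional_extensionality => -[[[[a1 a2] [b1 b2]] [c1 c2]] [e1 e2]].
apply: functional_extensionality => -[[[[a1' a2'] [b1' b2']] [c1' c2']] [e1' e2']].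
rewrite /ptrm /assocX sum_pair /=.
rewrite (sum2_fact (K := rAB (a1,b1) (a1',b1') * rBC (b2,c1) (b2',c1') * rDA (e2,a2) (e2',a2') * mD1 e1 e1') (f := fun h => rCD (c2, h) (c2', h)) (g := fun h => mD2 h h) (cf := mC2 c2 c2') (cg := 1)).
- by rewrite /S4c /=; ring.
- by move=> u v; rewrite /S5 /=; ring.
- by [].
- exact: tmD2.
Qed.

Lemma E11 : ptrm (assocX S4c) = W3.
Proof.
apply: functional_extensionality => -[[[a1 a2] [b1 b2]] [e1 e2]].
apply: functional_extensionality => -[[[a1' a2'] [b1' b2']] [e1' e2']].
rewrite /ptrm /assocX sum_pair /=.
rewrite (sum2_fact (K := rAB (a1,b1) (a1',b1') * rDA (e2,a2) (e2',a2') * mD1 e1 e1') (f := fun h => rBC (b2, h) (b2', h)) (g := fun h => mC2 h h) (cf := mB2 b2 b2') (cg := 1)).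
- by rewrite /W3 /=; ring.
- by move=> u v; rewrite /S4c /=; ring.
- by [].
- exact: tmC2.
Qed.

Lemma E12 : ptrm (assocX S4) = W3.
Proof.
apply: functional_extensionality => -[[[a1 a2] [b1 b2]] [e1 e2]].
apply: functional_extensionality => -[[[a1' a2'] [b1' b2']] [e1' e2']].
rewrite /ptrm /assocX sum_pair /=.
rewrite (sum2_fact (K := rAB (a1,b1) (a1',b1') * rDA (e2,a2) (e2',a2')) (f := fun h => rBC (b2, h) (b2', h)) (g := fun h => rCD (h, e1) (h, e1')) (cf := mB2 b2 b2') (cg := mD1 e1 e1')).
- by rewrite /W3 /=; ring.
- by move=> u v; rewrite /square_sources /=; ring.
- by [].
- by [].
Qed.

Lemma E13 : ptrm (assocX S3a) = (fun x y => otens mA1 mA2 x.1 y.1 * otens mC1 mC2 x.2 y.2).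
Proof.
apply: functional_extensionality => -[[a1 a2] [c1 c2]].
apply: functional_extensionality => -[[a1' a2'] [c1' c2']].
rewrite /ptrm /assocX sum_pair /=.
rewrite (sum2_fact (K := mC2 c2 c2' * mA2 a2 a2') (f := fun h => rAB (a1, h) (a1', h)) (g := fun h => rBC (h, c1) (h, c1')) (cf := mA1 a1 a1') (cg := mC1 c1 c1')).
- by rewrite /otens /= -/(ptr2 rAB a1 a1') -/(ptr1 rDA a2 a2') -/(ptr1 rBC c1 c1') -/(ptr2 rCD c2 c2'); ring.
- by move=> u v; rewrite /S3a /=; ring.
- by [].
- by [].
Qed.

Lemma E14 : ptr2 S6 = S5.
Proof.
apply: functional_extensionality => x; apply: functional_extensionality => y.
by rewrite ptr2_otens1 // ?tmD1 ?tmD2.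
Qed.

Lemma E15 : ptr2 S5b = S4.
Proof.
apply: functional_extensionality => x; apply: functional_extensionality => y.
by rewrite ptr2_otens1 // ?tmC1 ?tmC2.
Qed.

End P6.


Section P7.
Variable R : rcfType.
Local Notation C := (R[i]).

Lemma ii : ('i%C : C) * 'i%C = -1.
Proof. by rewrite -expr2 sqr_i. Qed.

Ltac qsolve a b := case: a; case: b;
  rewrite /mulop !big_bool /PauliX /PauliY /PauliZ /Id2 /idop /=;
  rewrite ?(mulr0, mul0r, addr0, add0r, mulr1, mul1r, mulrN, mulNr, opprK, ii, oppr0) //.

Lemma mXX a b : mulop (PauliX R) (PauliX R) a b = idop R a b. Proof. qsolve a b. Qed.
Lemma mYY a b : mulop (PauliY R) (PauliY R) a b = idop R a b. Proof. qsolve a b. Qed.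
Lemma mZZ a b : mulop (PauliZ R) (PauliZ R) a b = idop R a b. Proof. qsolve a b. Qed.
Lemma mII a b : mulop (Id2 R) (Id2 R) a b = idop R a b. Proof. qsolve a b. Qed.
Lemma mXZ a b : mulop (PauliX R) (PauliZ R) a b = - mulop (PauliZ R) (PauliX R) a b.
Proof. qsolve a b. Qed.
Lemma mXY a b : mulop (PauliX R) (PauliY R) a b = - mulop (PauliY R) (PauliX R) a b.
Proof. qsolve a b. all: idtac. Qed.
Lemma mYZ a b : mulop (PauliY R) (PauliZ R) a b = - mulop (PauliZ R) (PauliY R) a b.
Proof. qsolve a b. all: idtac. Qed.
Lemma mIl (P : op R qubit) a b : mulop (Id2 R) P a b = P a b.
Proof. by case: a; rewrite /mulop big_bool /Id2 /= ?mul1r ?mul0r ?addr0 ?add0r. Qed.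
Lemma mIr (P : op R qubit) a b : mulop P (Id2 R) a b = P a b.
Proof. by case: b; rewrite /mulop big_bool /Id2 /= ?mulr1 ?mulr0 ?addr0 ?add0r. Qed.

Lemma hX : herm (PauliX R).
Proof. by move=> a b; case: a; case: b; rewrite /PauliX /= ?rmorph1 ?rmorph0. Qed.
Lemma hZ : herm (PauliZ R).
Proof. by move=> a b; case: a; case: b; rewrite /PauliZ /= ?rmorph1 ?rmorph0 ?rmorphN ?rmorph1. Qed.
Lemma hI : herm (Id2 R).
Proof. by move=> a b; case: a; case: b; rewrite /Id2 /= ?rmorph1 ?rmorph0. Qed.
Lemma hY : herm (PauliY R).
Proof.
move=> a b; case: a; case: b; rewrite /PauliY /= ?rmorph0 //.
all: by apply/eqP; rewrite eq_complex /= ?oppr0 ?opprK !eqxx.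
Qed.

Lemma herm_otens (T U : finType) (P : op R T) (Q : op R U) :
  herm P -> herm Q -> herm (otens P Q).
Proof. by move=> hP hQ x y; rewrite /otens rmorphM /= hP hQ. Qed.

Lemma mulop_otens (T U : finType) (P P' : op R T) (Q Q' : op R U) x y :
  mulop (otens P Q) (otens P' Q') x y = mulop P P' x.1 y.1 * mulop Q Q' x.2 y.2.
Proof.
rewrite /mulop /otens sum_pair big_distrl /=; apply: eq_bigr => a _.
rewrite big_distrr /=; apply: eq_bigr => b _; ring.
Qed.

Lemma gexp_Id2 (T : finType) (E : op R T -> op R qubit) :
  channel E -> gexp (Id2 R) E = @idop R T.
Proof. exact: gexp_id. Qed.

Lemma tens2_eunit (T1 T2 U1 U2 : finType) (E : op R T1 -> op R U1) (F : op R T2 -> op R U2) x y u v :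
  tens2 E F (eunit R x y) u v = E (eunit R x.1 y.1) u.1 v.1 * F (eunit R x.2 y.2) u.2 v.2.
Proof.
exact: (NF_eunit x y (fun x' y' : T1 * T2 => E (eunit R x'.1 y'.1) u.1 v.1 * F (eunit R x'.2 y'.2) u.2 v.2)).
Qed.

Lemma tens4_nested (T1 T2 T3 T4 U1 U2 U3 U4 : finType)
  (E1 : op R T1 -> op R U1) (E2 : op R T2 -> op R U2)
  (E3 : op R T3 -> op R U3) (E4 : op R T4 -> op R U4) X :
  tens4 E1 E2 E3 E4 X = tens2 (tens2 (tens2 E1 E2) E3) E4 X.
Proof.
apply: functional_extensionality => u; apply: functional_extensionality => v.
rewrite -[RHS]/(\sum_(x : T1 * T2 * T3 * T4) \sum_(y : T1 * T2 * T3 * T4) X x y *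
   (tens2 (tens2 E1 E2) E3 (eunit R x.1 y.1) u.1 v.1 * E4 (eunit R x.2 y.2) u.2 v.2)).
rewrite /tens4; apply: eq_bigr => x _; apply: eq_bigr => y _.
rewrite tens2_eunit tens2_eunit; ring.
Qed.

Lemma pauli4_otens (PA PB PC PD : op R qubit) :
  pauli4 PA PB PC PD = otens (otens (otens PA PB) PC) PD.
Proof. by []. Qed.


Lemma psd_ptr2 (T U : finType) (r : op R (T * U)%type) : psd r -> psd (ptr2 r).
Proof.
move=> hr v; change (0 <= qform (ptr2 r) v).
pose w := fun (p : U) (z : T * U) => v z.1 * idop R z.2 p.
have e : forall p, qform r (w p) =
    \sum_(a : T) \sum_(a' : T) Num.conj (v a) * r (a, p) (a', p) * v a'.
  move=> p.
  transitivity (NF r (fun x y => Num.conj (w p x) * w p y)).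
    by rewrite /qform /NF; apply: eq_bigr => x _; apply: eq_bigr => y _; ring.
  rewrite NF_split; apply: eq_bigr => a _; apply: eq_bigr => a' _.
  transitivity (\sum_(b : U) \sum_(b' : U)
     ((r (a, b) (a', b') * Num.conj (v a) * v a') * idop R b p) * idop R b' p).
    apply: eq_bigr => b _; apply: eq_bigr => b' _.
    by rewrite /w /= rmorphM /= conj_idop; ring.
  under eq_bigr => b _ do rewrite sum_idr.
  by rewrite sum_idr; ring.
have -> : qform (ptr2 r) v = \sum_(p : U) qform r (w p).
  under [RHS]eq_bigr => p _ do rewrite e.
  rewrite /qform /ptr2 [RHS]sumC; apply: eq_bigr => a _.
  rewrite [RHS]sumC; apply: eq_bigr => a' _.
  by rewrite big_distrr big_distrl /=.
by apply: sumr_ge0 => p _; apply: hr.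
Qed.

Lemma psd_swap (T U : finType) (r : op R (T * U)%type) : psd r -> psd (swapX r).
Proof.
move=> hr; apply: (psd_reindex (f := fun z : U * T => (z.2, z.1)) (g := fun z => (z.2, z.1))) => //.
all: by case.
Qed.

Lemma psd_ptr1 (T U : finType) (r : op R (T * U)%type) : psd r -> psd (ptr1 r).
Proof. by move=> hr; apply: (psd_ptr2 (psd_swap hr)). Qed.

Lemma trace_otens (T U : finType) (P : op R T) (Q : op R U) :
  trace (otens P Q) = trace P * trace Q.
Proof.
rewrite /trace /otens sum_pair big_distrl /=; apply: eq_bigr => a _.
by rewrite big_distrr.
Qed.

Lemma trace_reindex (T T' : finType) (X : op R T) (f : T' -> T) (g : T -> T') :
  cancel f g -> cancel g f -> trace (fun x y => X (f x) (f y)) = trace X.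
Proof. by move=> fg gf; rewrite /trace (sum_reindex _ fg gf). Qed.

Lemma expect_mix (T L : finType) (O : op R T) (p : L -> R) (M : L -> op R T) :
  expect O (fun x y => \sum_(l : L) Complex (p l) 0 * M l x y) =
  \sum_(l : L) Complex (p l) 0 * expect O (M l).
Proof.
rewrite /expect.
under eq_bigr => a _ do under eq_bigr => b _ do rewrite big_distrr /=.
under eq_bigr => a _ do rewrite sumC.
rewrite sumC; apply: eq_bigr => l _.
rewrite big_distrr /=; apply: eq_bigr => a _.
rewrite big_distrr /=; apply: eq_bigr => b _; ring.
Qed.

Lemma complex_ge0 (x : R) : 0 <= x -> 0 <= (Complex x 0 : C).
Proof. by move=> h; rewrite lecE /= eqxx h. Qed.

Lemma psd_mix (T L : finType) (p : L -> R) (M : L -> op R T) :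
  (forall l, 0 <= p l) -> (forall l, psd (M l)) ->
  psd (fun x y => \sum_(l : L) Complex (p l) 0 * M l x y).
Proof.
move=> hp hM v; change (0 <= qform (fun x y => \sum_(l : L) Complex (p l) 0 * M l x y) v).
have -> : qform (fun x y => \sum_(l : L) Complex (p l) 0 * M l x y) v =
          \sum_(l : L) Complex (p l) 0 * qform (M l) v.
  rewrite /qform.
  under eq_bigr => a _ do under eq_bigr => b _ do rewrite big_distrr /= big_distrl /=.
  under eq_bigr => a _ do rewrite sumC.
  rewrite sumC; apply: eq_bigr => l _.
  rewrite big_distrr /=; apply: eq_bigr => a _.
  rewrite big_distrr /=; apply: eq_bigr => b _; ring.
by apply: sumr_ge0 => l _; apply: mulr_ge0; [apply: complex_ge0 | apply: hM].
Qed.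

Lemma sum_complex (L : finType) (p : L -> R) :
  \sum_(l : L) (Complex (p l) 0 : C) = Complex (\sum_(l : L) p l) 0.
Proof.
elim/big_rec2: _ => [|l y1 y2 _ ->] //.
by apply/eqP; rewrite eq_complex /= addr0 !eqxx.
Qed.

Lemma trace_mix (T L : finType) (p : L -> R) (M : L -> op R T) :
  \sum_(l : L) p l = 1 -> (forall l, trace (M l) = 1) ->
  trace (fun x y => \sum_(l : L) Complex (p l) 0 * M l x y) = 1.
Proof.
move=> hs hM; rewrite /trace sumC.
under eq_bigr => l _ do rewrite -big_distrr /= -/(trace (M l)) hM mulr1.
by rewrite sum_complex hs.
Qed.

End P7.


Section P8.
Variable R : rcfType.
Local Notation C := (R[i]).
Local Notation I := (Id2 R).
Local Notation X := (PauliX R).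
Local Notation Y := (PauliY R).
Local Notation Z := (PauliZ R).

Definition Q1 := otens (otens (otens (otens (otens I X) I) I) I) X.
Definition Q2 := otens (otens (otens (otens (otens I Z) X) Z) I) I.
Definition Q3 := otens (otens (otens (otens (otens X Y) I) I) Y) I.
Definition V1 := otens (otens (otens (otens X I) I) I) X.
Definition V2 := otens (otens (otens (otens Y Y) Z) Z) I.
Definition V3 := otens (otens (otens (otens Z I) I) I) I.

Ltac sqt x y := unfold Q1, Q2, Q3, V1, V2, V3; rewrite !mulop_otens ?mII ?mXX ?mYY ?mZZ;
  rewrite ?(idop_pair R x.1.1.1.1 y.1.1.1.1) (idop_pair R x.1.1.1 y.1.1.1) (idop_pair R x.1.1 y.1.1)
          (idop_pair R x.1 y.1) (idop_pair R x y) //.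
Ltac ant := move=> x y; unfold Q1, Q2, Q3, V1, V2, V3; rewrite !mulop_otens ?mIl ?mIr ?mXZ ?mXY ?mYZ; ring.
Ltac hrt := repeat apply: herm_otens; by [apply: hX | apply: hY | apply: hZ | apply: hI].

Lemma hQ1 : herm Q1. Proof. hrt. Qed.
Lemma hQ2 : herm Q2. Proof. hrt. Qed.
Lemma hQ3 : herm Q3. Proof. hrt. Qed.
Lemma hV1 : herm V1. Proof. hrt. Qed.
Lemma hV2 : herm V2. Proof. hrt. Qed.
Lemma hV3 : herm V3. Proof. hrt. Qed.
Lemma sQ1 x y : mulop Q1 Q1 x y = idop R x y. Proof. sqt x y. Qed.
Lemma sQ2 x y : mulop Q2 Q2 x y = idop R x y. Proof. sqt x y. Qed.
Lemma sQ3 x y : mulop Q3 Q3 x y = idop R x y. Proof. sqt x y. Qed.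
Lemma sV1 x y : mulop V1 V1 x y = idop R x y. Proof. sqt x y. Qed.
Lemma sV2 x y : mulop V2 V2 x y = idop R x y. Proof. sqt x y. Qed.
Lemma sV3 x y : mulop V3 V3 x y = idop R x y. Proof. sqt x y. Qed.
Lemma aQ12 x y : mulop Q1 Q2 x y + mulop Q2 Q1 x y = 0. Proof. move: x y; ant. Qed.
Lemma aQ13 x y : mulop Q1 Q3 x y + mulop Q3 Q1 x y = 0. Proof. move: x y; ant. Qed.
Lemma aQ23 x y : mulop Q2 Q3 x y + mulop Q3 Q2 x y = 0. Proof. move: x y; ant. Qed.
Lemma aV12 x y : mulop V1 V2 x y + mulop V2 V1 x y = 0. Proof. move: x y; ant. Qed.
Lemma aV13 x y : mulop V1 V3 x y + mulop V3 V1 x y = 0. Proof. move: x y; ant. Qed.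
Lemma aV23 x y : mulop V2 V3 x y + mulop V3 V2 x y = 0. Proof. move: x y; ant. Qed.

End P8.


Unset Implicit Arguments.

Theorem mainTheorem8 (R : rcfType) (rho : op R (qubit * qubit * qubit * qubit)%type) :
  square_network_state rho ->
  (expect (pauli4 (Id2 R) (PauliX R) (Id2 R) (PauliX R)) rho ^+ 2
   + expect (pauli4 (Id2 R) (PauliZ R) (PauliX R) (PauliZ R)) rho ^+ 2
   + expect (pauli4 (PauliX R) (PauliY R) (Id2 R) (PauliY R)) rho ^+ 2 <= 1)
  /\
  (expect (pauli4 (PauliX R) (Id2 R) (PauliX R) (Id2 R)) rho ^+ 2
   + expect (pauli4 (PauliY R) (PauliY R) (PauliZ R) (PauliZ R)) rho ^+ 2 <= 1).
Proof.
move=> [A1 [A2 [B1 [B2 [C1 [C2 [D1 [D2 [rAB [rBC [rCD [rDA [L [p [EA [EB [EC [ED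
  [[dAB dBC dCD dDA] [hp hs] hch ->]]]]]]]]]]]]]]]]]]].
case: dAB => pAB tAB; case: dBC => pBC tBC; case: dCD => pCD tCD; case: dDA => pDA tDA.
have cA : forall l, channel (EA l) by move=> l; case: (hch l).
have cB : forall l, channel (EB l) by move=> l; case: (hch l).
have cC : forall l, channel (EC l) by move=> l; case: (hch l).
have cD : forall l, channel (ED l) by move=> l; case: (hch l).
pose f4 := fun x : ((A1 * A2) * (B1 * B2) * (C1 * C2) * (D1 * D2))%type =>
  (((x.1.1.1.1, x.1.1.2.1), (x.1.1.2.2, x.1.2.1)), (x.1.2.2, x.2.1), (x.2.2, x.1.1.1.2)).
pose g4 := fun z : ((A1 * B1) * (B2 * C1) * (C2 * D1) * (D2 * A2))%type =>
  ((((z.1.1.1.1, z.2.2), (z.1.1.1.2, z.1.1.2.1)), (z.1.1.2.2, z.1.2.1)), (z.1.2.2, z.2.1)).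
have fg4 : cancel f4 g4 by move=> [[[[a1 a2] [b1 b2]] [c1 c2]] [d1 d2]].
have gf4 : cancel g4 f4 by move=> [[[[a1 b1] [b2 c1]] [c2 d1]] [d2 a2]].
pose Big4 := otens (otens (otens rAB rBC) rCD) rDA.
have pBig4 : psd Big4 by rewrite /Big4; repeat apply: otens_psd.
have pS4 : psd (square_sources rAB rBC rCD rDA) := psd_reindex fg4 gf4 pBig4.
have tS4 : trace (square_sources rAB rBC rCD rDA) = 1.
  have := trace_reindex Big4 fg4 gf4; rewrite -/(trace _) => ->.
  by rewrite /Big4 !trace_otens tAB tBC tCD tDA !mulr1.
pose f5 := fun x : ((A1 * A2) * (B1 * B2) * (C1 * C2) * (D1 * D2) * (D1 * D2))%type =>
  ((((((x.1.1.1.1.1, x.1.1.1.2.1), (x.1.1.1.2.2, x.1.1.2.1)), (x.1.1.2.2, x.1.2.1)),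
     (x.2.2, x.1.1.1.1.2)), x.1.2.2), x.2.1).
pose g5 := fun z : ((A1 * B1) * (B2 * C1) * (C2 * D1) * (D2 * A2) * D2 * D1)%type =>
  (((((z.1.1.1.1.1.1, z.1.1.2.2), (z.1.1.1.1.1.2, z.1.1.1.1.2.1)),
     (z.1.1.1.1.2.2, z.1.1.1.2.1)), (z.1.1.1.2.2, z.1.2)), (z.2, z.1.1.2.1)).
have fg5 : cancel f5 g5 by move=> [[[[[a1 a2] [b1 b2]] [c1 c2]] [e1 e2]] [h1 h2]].
have gf5 : cancel g5 f5 by move=> [[[[[[a1 b1] [b2 c1]] [c2 e1]] [h2 a2]] e2] h1].
pose Big5 := otens (otens (otens (otens (otens rAB rBC) rCD) rDA) (ptr2 rDA)) (ptr1 rCD).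
have pBig5 : psd Big5.
  rewrite /Big5; repeat apply: otens_psd => //; [apply: psd_ptr2 | apply: psd_ptr1] => //.
have pS5 : psd (S5 rAB rBC rCD rDA) := psd_reindex fg5 gf5 pBig5.
have tS5 : trace (S5 rAB rBC rCD rDA) = 1.
  have := trace_reindex Big5 fg5 gf5; rewrite -/(trace _) => ->.
  by rewrite /Big5 !trace_otens tAB tBC tCD tDA trace_ptr1 trace_ptr2 tCD tDA !mulr1.
have pS6 : psd (S6 rAB rBC rCD rDA).
  apply: otens_psd => //; apply: otens_psd; [apply: psd_ptr1 | apply: psd_ptr2] => //.
have tS6 : trace (S6 rAB rBC rCD rDA) = 1.
  by rewrite /S6 !trace_otens tS5 trace_ptr1 trace_ptr2 tCD tDA !mulr1.
have pS5b : psd (S5b rAB rBC rCD rDA).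
  apply: otens_psd => //; apply: otens_psd; [apply: psd_ptr1 | apply: psd_ptr2] => //.
have tS5b : trace (S5b rAB rBC rCD rDA) = 1.
  by rewrite /S5b !trace_otens tS4 trace_ptr1 trace_ptr2 tBC tCD !mulr1.
pose Et := fun l => tens2 (tens2 (tens2 (tens2 (tens2 (EA l) (EB l)) (EC l)) (ED l)) (ED l)) (ED l).
have cEt : forall l, channel (Et l) by move=> l; rewrite /Et; repeat apply: channel_tens2.
pose tau := fun x y => \sum_(l : L) Complex (p l) 0 * Et l (S6 rAB rBC rCD rDA) x y.
have ptau : psd tau := psd_mix hp (fun l => channel_psd (cEt l) pS6).
have ttau : trace tau = 1.
  by apply: trace_mix hs _ => l; case: (cEt l) => _ ht _; rewrite ht tS6.
have h1 : expect (Q1 R) tau = expect (pauli4 (Id2 R) (PauliX R) (Id2 R) (PauliX R))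
   (fun x y => \sum_(l : L) Complex (p l) 0 *
      tens4 (EA l) (EB l) (EC l) (ED l) (square_sources rAB rBC rCD rDA) x y).
  rewrite /tau !expect_mix; apply: eq_bigr => l _; congr (_ * _).
  rewrite tens4_nested pauli4_otens /Et /Q1 !expect_tens2 !gexp_tens2.
  rewrite ?(gexp_Id2 (cA l)) ?(gexp_Id2 (cB l)) ?(gexp_Id2 (cC l)) ?(gexp_Id2 (cD l)).
  transitivity (NF (otens (ptr1 rAB) (ptr2 rBC)) (gexp (PauliX R) (EB l)) *
                NF (otens (ptr1 rCD) (ptr2 rDA)) (gexp (PauliX R) (ED l))).
    rewrite (NF_prod (X1 := S5 rAB rBC rCD rDA) (X2 := otens (ptr1 rCD) (ptr2 rDA))) //.
    by rewrite !NF_id_r NF_id_l E1 // E2 // E3 // E4.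
  rewrite NF_assoc NF_assoc NF_id_l NF_mid E8 E9.
  by rewrite (NF_prod (X1 := otens (ptr1 rAB) (ptr2 rBC)) (X2 := otens (ptr1 rCD) (ptr2 rDA))).
have h2 : expect (Q2 R) tau = expect (pauli4 (Id2 R) (PauliZ R) (PauliX R) (PauliZ R))
   (fun x y => \sum_(l : L) Complex (p l) 0 *
      tens4 (EA l) (EB l) (EC l) (ED l) (square_sources rAB rBC rCD rDA) x y).
  rewrite /tau !expect_mix; apply: eq_bigr => l _; congr (_ * _).
  rewrite tens4_nested pauli4_otens /Et /Q2 !expect_tens2 !gexp_tens2.
  rewrite ?(gexp_Id2 (cA l)) ?(gexp_Id2 (cB l)) ?(gexp_Id2 (cC l)) ?(gexp_Id2 (cD l)).
  transitivity (NF (W2 rAB rBC rCD rDA)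
     (G2 (gexp (PauliZ R) (EB l)) (G2 (gexp (PauliX R) (EC l)) (gexp (PauliZ R) (ED l))))).
    by rewrite [LHS]NF_id_r E14 // [LHS]NF_id_r E1 // [LHS]NF_assoc [LHS]NF_assoc [LHS]NF_id_l E7.
  by rewrite [RHS]NF_assoc [RHS]NF_assoc [RHS]NF_id_l E8.
have h3 : expect (Q3 R) tau = expect (pauli4 (PauliX R) (PauliY R) (Id2 R) (PauliY R))
   (fun x y => \sum_(l : L) Complex (p l) 0 *
      tens4 (EA l) (EB l) (EC l) (ED l) (square_sources rAB rBC rCD rDA) x y).
  rewrite /tau !expect_mix; apply: eq_bigr => l _; congr (_ * _).
  rewrite tens4_nested pauli4_otens /Et /Q3 !expect_tens2 !gexp_tens2.
  rewrite ?(gexp_Id2 (cA l)) ?(gexp_Id2 (cB l)) ?(gexp_Id2 (cC l)) ?(gexp_Id2 (cD l)).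
  transitivity (NF (W3 rAB rBC rCD rDA)
     (G2 (G2 (gexp (PauliX R) (EA l)) (gexp (PauliY R) (EB l))) (gexp (PauliY R) (ED l)))).
    rewrite [LHS]NF_id_r E14 // [LHS]NF_assoc [LHS]NF_mid E10 //.
    by rewrite [LHS]NF_assoc [LHS]NF_mid E11.
  by rewrite [RHS]NF_assoc [RHS]NF_mid E12.
split.
  rewrite -h1 -h2 -h3.
  apply: anti3 => //; [exact: hQ1 | exact: hQ2 | exact: hQ3 | exact: sQ1 | exact: sQ2 | exact: sQ3
                     | exact: aQ12 | exact: aQ13 | exact: aQ23].
pose Et2 := fun l => tens2 (tens2 (tens2 (tens2 (EA l) (EB l)) (EC l)) (ED l)) (EC l).
have cEt2 : forall l, channel (Et2 l) by move=> l; rewrite /Et2; repeat apply: channel_tens2.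
pose tau2 := fun x y => \sum_(l : L) Complex (p l) 0 * Et2 l (S5b rAB rBC rCD rDA) x y.
have ptau2 : psd tau2 := psd_mix hp (fun l => channel_psd (cEt2 l) pS5b).
have ttau2 : trace tau2 = 1.
  by apply: trace_mix hs _ => l; case: (cEt2 l) => _ ht _; rewrite ht tS5b.
have h4 : expect (V1 R) tau2 = expect (pauli4 (PauliX R) (Id2 R) (PauliX R) (Id2 R))
   (fun x y => \sum_(l : L) Complex (p l) 0 *
      tens4 (EA l) (EB l) (EC l) (ED l) (square_sources rAB rBC rCD rDA) x y).
  rewrite /tau2 !expect_mix; apply: eq_bigr => l _; congr (_ * _).
  rewrite tens4_nested pauli4_otens /Et2 /V1 !expect_tens2 !gexp_tens2.
  rewrite ?(gexp_Id2 (cA l)) ?(gexp_Id2 (cB l)) ?(gexp_Id2 (cC l)) ?(gexp_Id2 (cD l)).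
  transitivity (NF (otens (ptr2 rAB) (ptr1 rDA)) (gexp (PauliX R) (EA l)) *
                NF (otens (ptr1 rBC) (ptr2 rCD)) (gexp (PauliX R) (EC l))).
    rewrite (NF_prod (X1 := square_sources rAB rBC rCD rDA)
                     (X2 := otens (ptr1 rBC) (ptr2 rCD))) //.
    by rewrite !NF_id_r E5 E3 // E6.
  rewrite [RHS]NF_id_r E5 [RHS]NF_assoc [RHS]NF_mid E13.
  by rewrite (NF_prod (X1 := otens (ptr2 rAB) (ptr1 rDA)) (X2 := otens (ptr1 rBC) (ptr2 rCD))).
have h5 : expect (V2 R) tau2 = expect (pauli4 (PauliY R) (PauliY R) (PauliZ R) (PauliZ R))
   (fun x y => \sum_(l : L) Complex (p l) 0 *
      tens4 (EA l) (EB l) (EC l) (ED l) (square_sources rAB rBC rCD rDA) x y).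
  rewrite /tau2 !expect_mix; apply: eq_bigr => l _; congr (_ * _).
  rewrite tens4_nested pauli4_otens /Et2 /V2 !expect_tens2 !gexp_tens2.
  rewrite ?(gexp_Id2 (cA l)) ?(gexp_Id2 (cB l)) ?(gexp_Id2 (cC l)) ?(gexp_Id2 (cD l)).
  by rewrite [LHS]NF_id_r E15.
have key := anti3 ptau2 ttau2 (@hV1 R) (@hV2 R) (@hV3 R) (@sV1 R) (@sV2 R) (@sV3 R)
   (@aV12 R) (@aV13 R) (@aV23 R).
have q3 := real_sq_ge0 (expect_real ptau2 (@hV3 R)).
rewrite -h4 -h5; apply: le_trans key; by rewrite lerDl.
Qed.
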